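(* For $n\ge3$, $$\mathcal{K}_n(\lambda)=\lambda\,\mathcal{A}_{n-1}(\lambda)-\lambda^2\,\mathcal{A}_{n-3}(\lambda).$$
   Context: For $n\ge3$, $\mathcal{K}_n(\lambda)=\det(\lambda I_n-M_n)$, where $(M_n)_{j,i}=1$ if $i\ge j-1$ or $(j,i)=(n,n-2)$, and $0$ otherwise. For $n\ge1$, $\mathcal{A}_n(\lambda)=\det(\lambda I_n-N_n)$ with $(N_n)_{j,i}=1$ if $i\ge j-1$ and $0$ otherwise; $\mathcal{A}_0(\lambda)=1$. *)

(* Defs.v *)
From mathcomp Require Import all_boot all_algebra.
Set Implicit Arguments. Unset Strict Implicit. Unset Printing Implicit Defensive.
Import GRing.Theory.
Local Open Scope ring_scope.

(* Indices are 0-based: entry (j, i) of the paper (1-based, row j, column i)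
   is entry (j-1, i-1) here.  The conditions are translated accordingly:
   i >= j - 1 (1-based)  <->  i + 1 >= j (0-based, same shift on both sides),
   (j,i) = (n, n-2)      <->  (j,i) = (n-1, n-3). *)

Definition Nmx (R : nzRingType) (n : nat) : 'M[R]_n :=
  \matrix_(j < n, i < n) (if (j <= i.+1)%N then 1 else 0).

Definition Kmx (R : nzRingType) (n : nat) : 'M[R]_n :=
  \matrix_(j < n, i < n)
    (if ((j <= i.+1)%N || ((nat_of_ord j == n.-1) && (nat_of_ord i == n - 3))%N) then 1 else 0).

Definition Kpoly (R : comNzRingType) (n : nat) : {poly R} := char_poly (Kmx R n).

Definition Apoly (R : comNzRingType) (n : nat) : {poly R} :=
  if n is 0 then 1 else char_poly (Nmx R n).

(* Main.v *)
Require Import Defs.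
From mathcomp Require Import all_boot all_algebra ring.
Import GRing.Theory.
Local Open Scope ring_scope.

Lemma key (R : comNzRingType) n (X : 'M[R]_(n.+2)) c :
  (forall j : 'I_(n.+2), (1 < j)%N -> X j ord0 = 0) ->
  (forall i : 'I_(n.+2), (0 < i)%N ->
      X ord0 i = X (lift ord0 ord0) i + (if i == 1%N :> nat then c else 0)) ->
  \det X = (X ord0 ord0 - X (lift ord0 ord0) ord0) * \det (row' ord0 (col' ord0 X))
     - X (lift ord0 ord0) ord0 * c
       * \det (row' ord0 (col' ord0 (row' ord0 (col' ord0 X)))).
Proof.
move=> H0 H1.
set Y := row' ord0 (col' ord0 X).
rewrite (expand_det_col X ord0) !big_ord_recl big1; last first.
  by move=> i _; rewrite H0 ?mul0r.
rewrite addr0 /cofactor /=.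
set Z := row' (lift ord0 ord0) (col' ord0 X).
pose C := \matrix_(j, k) if j == ord0 then (k == ord0)%:R else Y j k.
have dZ : \det Z = 1 * \det Y + c * \det C.
  apply: (determinant_multilinear (i0 := ord0)).
  - apply/rowP => k; rewrite !mxE.
    have -> : lift (lift ord0 ord0) ord0 = ord0 :> 'I_n.+2 by apply: val_inj.
    rewrite H1 //= mul1r; congr (_ + _).
    by case: k => [[|k] hk]; rewrite /bump /= ?mulr1 ?mulr0.
  - apply/matrixP => j k; rewrite !mxE; congr (X _ _); exact: val_inj.
  - apply/matrixP => j k; rewrite !mxE /=.
    congr (X _ _); exact: val_inj.
have dC : \det C = \det (row' ord0 (col' ord0 Y)).
  rewrite (expand_det_row C ord0) big_ord_recl big1; last first.
    by move=> i _; rewrite !mxE /= mul0r.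
  rewrite addr0 /cofactor !mxE eqxx mul1r /= expr0 mul1r.
  congr (\det _); apply/matrixP => j k; rewrite !mxE //.
rewrite dZ dC.
rewrite -/Y /bump /= expr0 expr1.
ring.
Qed.

Lemma rec_gen0 (R : comNzRingType) n (A : 'M[R]_(n.+2)) :
  (forall j : 'I_(n.+2), (1 < j)%N -> A j ord0 = 0) ->
  (forall i : 'I_(n.+2), A ord0 i = 1) ->
  (forall i : 'I_(n.+2), A (lift ord0 ord0) i = 1) ->
  char_poly A = 'X * char_poly (row' ord0 (col' ord0 A))
     - 'X * char_poly (row' ord0 (col' ord0 (row' ord0 (col' ord0 A)))).
Proof.
move=> H0 H1 H2.
rewrite /char_poly (@key _ _ _ (- 'X)); last first.
- move=> i hi; rewrite !mxE H1 H2.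
  case: i hi => [[|[|i]] hi] //= _; rewrite ?mulr1n ?mulr0n //; ring.
- by move=> j hj; rewrite !mxE H0 //; case: j hj => [[|j] hj] //= _; rewrite mulr0n; ring.
rewrite !row'_col'_char_poly_mx !mxE H1 H2 /=.
rewrite mulr1n mulr0n; ring.
Qed.

Lemma shiftN (R : comNzRingType) n : row' ord0 (col' ord0 (Nmx R n.+1)) = Nmx R n.
Proof. by apply/matrixP => i j; rewrite !mxE. Qed.

Lemma shiftK (R : comNzRingType) n : (3 <= n)%N -> row' ord0 (col' ord0 (Kmx R n.+1)) = Kmx R n.
Proof.
move=> hn; apply/matrixP => i j; rewrite !mxE /=.
case: n hn i j => [|[|[|n]]] //= _ i j.
by rewrite /bump /= !add1n ltnS !eqSS !subSS !subn0.
Qed.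

Lemma shiftK3 (R : comNzRingType) : row' ord0 (col' ord0 (Kmx R 3)) = Nmx R 2.
Proof. by apply/matrixP => i j; rewrite !mxE; case: i j => [[|[|i]] hi] [[|[|j]] hj]. Qed.

Lemma rec_gen (R : comNzRingType) n (A : 'M[R]_(n.+2)) B C :
  (forall j : 'I_(n.+2), (1 < j)%N -> A j ord0 = 0) ->
  (forall i : 'I_(n.+2), A ord0 i = 1) ->
  (forall i : 'I_(n.+2), A (lift ord0 ord0) i = 1) ->
  row' ord0 (col' ord0 A) = B ->
  row' ord0 (col' ord0 B) = C ->
  char_poly A = 'X * char_poly B - 'X * char_poly C.
Proof. by move=> H0 H1 H2 eB eC; rewrite rec_gen0 // eB eC. Qed.

Lemma K3 (R : comNzRingType) : char_poly (Kmx R 3) = 'X * 'X * 'X - 3%:R * 'X * 'X :> {poly R}.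
Proof.
rewrite /char_poly (expand_det_row _ ord0) !big_ord_recl big_ord0 /cofactor.
rewrite !(expand_det_row _ ord0) !big_ord_recl !big_ord0 /cofactor.
rewrite !det_mx11 !mxE /bump /= polyC1 !mulr1n !mulr0n; ring.
Qed.

Lemma A1 (R : comNzRingType) : char_poly (Nmx R 1) = 'X - 1.
Proof. by rewrite /char_poly det_mx11 !mxE /= polyC1 mulr1n. Qed.

Lemma A0 (R : comNzRingType) : char_poly (Nmx R 0) = 1.
Proof. by rewrite /char_poly det_mx00. Qed.

Lemma Arec (R : comNzRingType) n : char_poly (Nmx R n.+2) =
  'X * char_poly (Nmx R n.+1) - 'X * char_poly (Nmx R n).
Proof.
rewrite (@rec_gen _ _ _ (Nmx R n.+1) (Nmx R n)) //; try exact: shiftN.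
- by move=> j hj; rewrite mxE; case: j hj => [[|[|j]] hj].
- by move=> i; rewrite mxE.
- by move=> i; rewrite mxE.
Qed.

Lemma Krec (R : comNzRingType) n : (2 <= n)%N -> char_poly (Kmx R n.+2) =
  'X * char_poly (Kmx R n.+1) - 'X * char_poly (row' ord0 (col' ord0 (Kmx R n.+1))).
Proof.
move=> hn.
rewrite (@rec_gen _ _ _ (Kmx R n.+1) (row' ord0 (col' ord0 (Kmx R n.+1)))) //; try exact: shiftK.
- move=> j hj; rewrite mxE; case: j hj => [[|[|j]] hj] //= _.
  by case: n hn hj => [|[|n]] //= _ _; rewrite !subSS subn0 andbF.
- by move=> i; rewrite mxE.
- by move=> i; rewrite mxE.
Qed.

Lemma ApE (R : comNzRingType) m : Apoly R m = char_poly (Nmx R m).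
Proof. by case: m => [|m] //; rewrite A0. Qed.

Lemma K4 (R : comNzRingType) : char_poly (Kmx R 4) =
  'X * char_poly (Kmx R 3) - 'X * char_poly (Nmx R 2).
Proof. by rewrite (Krec R 2) // shiftK3. Qed.

Lemma K5 (R : comNzRingType) m : char_poly (Kmx R m.+4.+1) =
  'X * char_poly (Kmx R m.+4) - 'X * char_poly (Kmx R m.+3).
Proof.
rewrite (Krec R m.+3) //.
have -> : row' ord0 (col' ord0 (Kmx R m.+4)) = Kmx R m.+3 by exact: shiftK.
by [].
Qed.

Theorem lemma4 (R : comNzRingType) (n : nat) (hn : (3 <= n)%N) :
  Kpoly R n = 'X * Apoly R n.-1 - 'X ^+ 2 * Apoly R (n - 3)%N.
Proof.
have P : forall m, char_poly (Kmx R m.+3) = 'X * char_poly (Nmx R m.+2) - 'X ^+ 2 * char_poly (Nmx R m)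
   /\ char_poly (Kmx R m.+4) = 'X * char_poly (Nmx R m.+3) - 'X ^+ 2 * char_poly (Nmx R m.+1).
  elim=> [|m [IH1 IH2]].
    rewrite K4 K3 !Arec A1 A0; split; ring.
  split => //.
  rewrite K5 IH1 IH2 (Arec _ m.+2) (Arec _ m); ring.
case: n hn => [|[|[|m]]] // _.
rewrite /Kpoly !ApE /= ?subSS ?subn0.
exact: (P m).1.
Qed.
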